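(* Let ${\bf r}=(r_0,r_1,\dots)$ be a finitely supported sequence of nonnegative integers with $n=\sum_{d\ge1}r_d\ge1$, $\ell=-\sum_{d\ge0}(d-1)r_d\ge1$. Then the polynomial identity $$\sum_{F\in\mathscr F({\bf r})}\prod_{v\in I(F)}\frac{((d_v-1)h_v+1)x+1-h_v}{d_vh_v}=\frac{\ell}{r_0}\cdot\frac{(r_0x)(r_0x-1)\cdots(r_0x-n+1)}{r_1!\,r_2!\cdots}$$ holds if and only if the polynomial identity $$\sum_{F\in\mathscr F({\bf r})}\prod_{v\in I(F)}\frac{(d_v+x)h_v-x}{d_vh_v}=\frac{\ell}{r_1!\,r_2!\cdots}\prod_{i=1}^{n-1}\big(r_0+i(1+x)\big)$$ holds.
   Context: A plane tree is an unlabelled rooted tree in which the children of every vertex are linearly ordered; a plane forest is a finite linearly ordered sequence of plane trees. For vertices $u,v$ in a tree, $v$ is a descendant of $u$ if $u$ lies on the path from the root to $v$ (so $u$ is a descendant of itself). The degree $d_v$ is the number of children of $v$; $v$ is internal if $d_v\ge1$. $I(F)$ is the set of internal vertices of $F$. The hook length $h_v$ of an internal vertex $v$ is the number of internal vertices among the descendants of $v$ (including $v$). A plane forest has type ${\bf r}$ if it has exactly $r_i$ vertices of degree $i$ for all $i\ge0$; $\mathscr F({\bf r})$ is the set of such forests. *)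

(* Defs.v *)
From mathcomp Require Import all_boot all_algebra.
Set Implicit Arguments. Unset Strict Implicit. Unset Printing Implicit Defensive.
Import GRing.Theory Num.Theory.

Inductive ptree := Node of seq ptree.

Definition pforest := seq ptree.

Fixpoint degs (t : ptree) : seq nat :=
  let: Node ts := t in size ts :: flatten (map degs ts).

Definition fdegs (F : pforest) : seq nat := flatten (map degs F).

Definition nint (t : ptree) : nat := count (fun d => 0 < d) (degs t).

(* list of pairs (d_v, h_v) over the internal vertices v of a tree;
   h_v = number of internal descendants of v (including v) *)
Fixpoint ivdata (t : ptree) : seq (nat * nat) :=
  let: Node ts := t in
  (if ts is [::] then [::] else [:: (size ts, nint (Node ts))])
  ++ flatten (map ivdata ts).

Definition fivdata (F : pforest) : seq (nat * nat) := flatten (map ivdata F).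

(* a type r = (r_0, r_1, ...) is a finitely supported sequence, given by
   a seq with r_i = nth 0 r i (zero beyond its size) *)
Definition rr (r : seq nat) (i : nat) : nat := nth 0 r i.

Definition has_type (r : seq nat) (F : pforest) : Prop :=
  forall i, count_mem i (fdegs F) = rr r i.

Definition nn (r : seq nat) : nat := \sum_(1 <= d < size r) rr r d.

Definition ll (r : seq nat) : int :=
  - \sum_(0 <= d < size r) ((d%:Z - 1) * (rr r d)%:Z).

Definition rfact (r : seq nat) : nat := \prod_(1 <= d < size r) (rr r d)`!.

Local Open Scope ring_scope.

Definition forest_sum (s : seq pforest) (w : nat -> nat -> {poly rat}) : {poly rat} :=
  \sum_(F <- s) \prod_(p <- fivdata F) w p.1 p.2.

Definition w1 (d h : nat) : {poly rat} :=
  ((((d%:Z - 1) * h%:Z + 1)%:~R *: 'X + (1 - h%:Z)%:~R%:P)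
     * ((d * h)%:R^-1)%:P).

Definition w2 (d h : nat) : {poly rat} :=
  ((d * h)%:R%:P + (h%:Z - 1)%:~R *: 'X) * ((d * h)%:R^-1)%:P.

Definition rhs1 (r : seq nat) : {poly rat} :=
  ((ll r)%:~R / (rr r 0)%:R / (rfact r)%:R)%:P
  * \prod_(0 <= i < nn r) ((rr r 0)%:R *: 'X - i%:R%:P).

Definition rhs2 (r : seq nat) : {poly rat} :=
  ((ll r)%:~R / (rfact r)%:R)%:P
  * \prod_(1 <= i < nn r) ((rr r 0)%:R%:P + i%:R *: (1 + 'X)).

(* Main.v *)
Require Import Defs.
From mathcomp Require Import all_boot all_order all_algebra.
From Stdlib Require List.
Import Order.TTheory GRing.Theory Num.Theory.

Definition ptree_ind2 (P : ptree -> Prop)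
  (H : forall ts, List.Forall P ts -> P (Node ts)) : forall t, P t :=
  fix f t := let: Node ts := t in
    H ts ((fix g ts : List.Forall P ts :=
            match ts with
            | [::] => List.Forall_nil _
            | t :: ts' => List.Forall_cons _ (f t) (g ts') end) ts).

Lemma size_ivdata_flat ts :
  List.Forall (fun t => size (ivdata t) = count (fun d => 0 < d) (degs t)) ts ->
  size (flatten (map ivdata ts)) = count (fun d => 0 < d) (flatten (map degs ts)).
Proof.
elim: ts => [|t ts IH] //= H; inversion H; subst.
by rewrite size_cat count_cat IH // H2.
Qed.

Lemma size_ivdata t : size (ivdata t) = count (fun d => 0 < d) (degs t).
Proof.
elim/ptree_ind2: t => ts H /=.
rewrite size_cat size_ivdata_flat //.
by case: ts H.
Qed.

Lemma size_fivdata F : size (fivdata F) = count (fun d => 0 < d) (fdegs F).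
Proof.
elim: F => [|t F IH] //=.
by rewrite /fivdata /fdegs /= size_cat count_cat size_ivdata -IH.
Qed.

Lemma sum_ind x N : \sum_(1 <= d < N) (x == d) = (0 < x < N).
Proof.
elim: N => [|N IH]; first by rewrite big_geq // andbF.
case: (posnP N) => [->|Npos]; first by rewrite big_geq //; clear IH; case: x.
rewrite big_nat_recr //= IH.
case: (ltngtP x N) => H.
- by rewrite (ltn_trans H (ltnSn _)) andbT addn0.
- by rewrite andbF addn0 ltnS (leqNgt x N) H andbF.
- by rewrite H ltnSn Npos andbF.
Qed.

Lemma count_pos_sum l N : all (fun x => x < N) l ->
  count (fun x => 0 < x) l = \sum_(1 <= d < N) count_mem d l.
Proof.
elim: l => [|x l IH] /=; first by rewrite big1.
move=> /andP [xN al].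
rewrite big_split /= IH // sum_ind xN andbT.
by congr (_ + _); apply: eq_bigr => i _; apply: eq_count => y.
Qed.

Lemma size_type r F : has_type r F -> size (fivdata F) = nn r.
Proof.
move=> Ht; rewrite size_fivdata (@count_pos_sum _ (size r)).
  by rewrite /nn; apply: eq_bigr => d _; rewrite Ht.
apply/allP => x xin; rewrite ltnNge; apply/negP => le.
have := Ht x; rewrite /rr nth_default //.
move/eqP; rewrite -[_ == 0]negbK -lt0n -has_count has_pred1 xin //.
Qed.

From mathcomp Require Import ring.
Local Open Scope ring_scope.

Lemma key_w (d h : nat) (y : rat) : y != 0 ->
  (w1 d h).[y] = y * (w2 d h).[-(y+1)/y].
Proof.
move=> y0; rewrite /w1 /w2 !hornerE /=.
set c := ((d * h)%:R)^-1.
rewrite !rmorphD !rmorphM !rmorphB /=.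
clearbody c.
by field.
Qed.

Lemma key_prod (l : seq (nat * nat)) (y : rat) : y != 0 ->
  (\prod_(p <- l) w1 p.1 p.2).[y] =
  y ^+ (size l) * (\prod_(p <- l) w2 p.1 p.2).[-(y+1)/y].
Proof.
move=> y0; elim: l => [|p l IH]; first by rewrite !big_nil /= expr0 !hornerE ?mulr1 ?mul1r.
by rewrite !big_cons (hornerM (w1 p.1 p.2)) (hornerM (w2 p.1 p.2)) IH key_w // exprS /=; ring.
Qed.

Lemma key_sum r (s : seq pforest) (y : rat) : y != 0 ->
  (forall F, List.In F s -> has_type r F) ->
  (forest_sum s w1).[y] = y ^+ (nn r) * (forest_sum s w2).[-(y+1)/y].
Proof.
move=> y0; rewrite /forest_sum; elim: s => [|F s IH] H.
  by rewrite !big_nil !hornerE ?mulr0.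
rewrite !big_cons !hornerD IH; last by move=> G HG; apply: H; right.
rewrite key_prod // (@size_type r F); last by apply: H; left.
by rewrite mulrDr.
Qed.

Lemma r0_pos r : 1 <= ll r -> (0 < rr r 0)%N.
Proof.
move=> Hl; rewrite lt0n; apply/negP => /eqP r0.
have S0 : 0 <= \sum_(0 <= d < size r) ((d%:Z - 1) * (rr r d)%:Z).
  apply: sumr_ge0 => d _; case: d => [|d]; first by rewrite r0 mulr0.
  by apply: mulr_ge0 => //; rewrite subr_ge0 lez_nat.
move: Hl; rewrite /ll; move: S0; set S := \sum_(_ <= _ < _) _ => S0 Hl.
have H2 : - S <= 0 by rewrite oppr_le0.
by have := le_trans Hl H2.
Qed.

Lemma rhs_key r (y : rat) : (0 < rr r 0)%N -> (1 <= nn r)%N -> y != 0 ->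
  (rhs1 r).[y] = y ^+ (nn r) * (rhs2 r).[-(y+1)/y].
Proof.
move=> r0 Hn y0; rewrite /rhs1 /rhs2 !hornerM !hornerC !horner_prod.
rewrite (big_ltn Hn).
have E : y ^+ nn r = y * \prod_(1 <= i < nn r) y.
  by rewrite prodr_const_nat -exprS subn1 prednK.
have P : \prod_(1 <= i < nn r) ((rr r 0)%:R *: 'X - (i%:R)%:P).[y] =
   \prod_(1 <= i < nn r) y *
   \prod_(1 <= i < nn r) ((rr r 0)%:R%:P + i%:R *: (1 + 'X)).[- (y + 1) / y].
  rewrite -big_split; apply: eq_bigr => i _ /=; rewrite !hornerE; by field.
rewrite E P.
have r0n : (rr r 0)%:R != 0 :> rat by rewrite pnatr_eq0 -lt0n.
move: r0n.
set Y := \prod_(1 <= i < nn r) y.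
set Q := \prod_(1 <= i < nn r) _.
move=> r0n; rewrite !hornerE.
clearbody Y Q; move: r0n; set a := (rr r 0)%:R; clearbody a => r0n /=. field; rewrite r0n andbT pnatr_eq0 -lt0n; apply: prodn_gt0 => i; exact: fact_gt0.
Qed.

Lemma poly_eq_off (p q : {poly rat}) (a : rat) :
  (forall x, x != a -> p.[x] = q.[x]) -> p = q.
Proof.
move=> H; apply/eqP; rewrite -subr_eq0; apply/negPn/negP => nz.
set rs := [seq a + (i.+1)%:R | i <- iota 0 (size (p - q))].
suff: (size rs < size (p - q)%R)%N by rewrite size_map size_iota ltnn.
apply: (max_poly_roots nz).
  apply/allP => x /mapP [i _ ->]; rewrite /root !hornerE H ?subrr //.
  by rewrite -subr_eq0 addrC addKr pnatr_eq0.
rewrite map_inj_uniq ?iota_uniq // => i j /addrI /eqP.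
by rewrite eqr_nat => /eqP [].
Qed.

Theorem lemma3p2 (r : seq nat) (s : seq pforest)
  (Hs_nodup : List.NoDup s)
  (Hs : forall F : pforest, List.In F s <-> has_type r F)
  (Hn : (1 <= nn r)%N) (Hl : 1 <= ll r) :
  forest_sum s w1 = rhs1 r <-> forest_sum s w2 = rhs2 r.
Proof.
have HT : forall F, List.In F s -> has_type r F by move=> F; case: (Hs F).
have r0 := @r0_pos r Hl.
split => E.
- apply: (@poly_eq_off _ _ (-1)) => x x1.
  have x10 : x + 1 != 0 by rewrite addr_eq0.
  set y := - (x + 1)^-1.
  have y0 : y != 0 by rewrite oppr_eq0 invr_eq0.
  have xy : x = - (y + 1) / y by rewrite /y; field.
  have := @key_sum r s y y0 HT; rewrite E rhs_key // -xy => Heq.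
  apply/esym/(mulfI _ Heq); by rewrite expf_eq0 negb_and y0 orbT.
- apply: (@poly_eq_off _ _ 0) => y y0.
  by rewrite (@key_sum r s y y0 HT) E rhs_key.
Qed.
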